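(* Let $\epsilon=(\epsilon_n)\in(0,1]^{\mathbb{N}}$ and $\omega\in\beta\mathbb{N}$. The complete residue field $\mathscr{H}(\omega)$ is algebraically closed and spherically complete, and $|\mathscr{H}(\omega)|=\mathbb{R}_+$. Moreover: (1) if $e=\lim_\omega\epsilon_n>0$, then $\mathscr{H}(\omega)$ is isometric to $(\mathbb{C},|\cdot|^e)$, hence is an Archimedean metrized field; (2) if $\lim_\omega\epsilon_n=0$, then $\mathscr{H}(\omega)$ is a non-Archimedean metrized field.
   Context: $A^\epsilon=\{(x_n)\in\mathbb{C}^{\mathbb{N}}:\sup_n|x_n|^{\epsilon_n}<\infty\}$ with norm $\|x\|=\sup_n|x_n|^{\epsilon_n}$ ($|\cdot|$ the Euclidean norm). $\beta\mathbb{N}$ is the set of ultrafilters on $\mathbb{N}$; for $\omega\in\beta\mathbb{N}$, $\lim_\omega$ denotes the limit along $\omega$. Each $\omega$ defines the bounded multiplicative seminorm $|x|_\omega=\lim_\omega|x_n|^{\epsilon_n}$ on $A^\epsilon$, with kernel $\ker(\omega)=\{x:\lim_\omega|x_n|^{\epsilon_n}=0\}$; $\mathscr{H}(\omega)$ is the completion of the fraction field of $A^\epsilon/\ker(\omega)$ for the induced norm. A metrized field is spherically complete if every decreasing sequence of closed balls has nonempty intersection. *)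

(* Defs.v *)
From HB Require Import structures.
From mathcomp Require Import all_boot all_order all_algebra.
From mathcomp Require Import all_classical all_reals all_analysis.
From mathcomp Require Import complex.
Set Implicit Arguments. Unset Strict Implicit. Unset Printing Implicit Defensive.
Import Order.TTheory GRing.Theory Num.Theory.
Import numFieldTopology.Exports numFieldNormedType.Exports.
Local Open Scope classical_set_scope.
Local Open Scope ring_scope.

Definition cmod (R : realType) (z : R[i]) : R :=
  Num.sqrt (complex.Re z ^+ 2 + complex.Im z ^+ 2).

Definition Aeps (R : realType) (eps : nat -> R) : set (nat -> R[i]) :=
  [set x | exists M : R, forall n, cmod (x n) `^ eps n <= M].

Definition ulim (R : realType) (omega : set_system nat) (u : nat -> R) : R :=
  lim (u @ omega).

Definition absw (R : realType) (eps : nat -> R) (omega : set_system nat)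
  (x : nat -> R[i]) : R :=
  ulim omega (fun n => cmod (x n) `^ eps n).

Definition metrized_field_norm (R : realType) (K : fieldType) (v : K -> R) : Prop :=
  [/\ forall x, 0 <= v x,
      forall x, v x = 0 <-> x = 0,
      forall x y, v (x * y) = v x * v y
    & forall x y, v (x + y) <= v x + v y].

Definition non_archimedean (R : realType) (K : fieldType) (v : K -> R) : Prop :=
  forall x y, v (x + y) <= Num.max (v x) (v y).

Definition archimedean_norm (R : realType) (K : fieldType) (v : K -> R) : Prop :=
  ~ non_archimedean v.

Definition complete_for (R : realType) (K : fieldType) (v : K -> R) : Prop :=
  forall u : nat -> K,
    (forall e : R, 0 < e -> exists N, forall m n, (N <= m)%N -> (N <= n)%N ->
        v (u m - u n) < e) ->
    exists l : K, forall e : R, 0 < e -> exists N, forall n, (N <= n)%N ->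
        v (u n - l) < e.

Definition cball (R : realType) (K : fieldType) (v : K -> R) (a : K) (r : R) : set K :=
  [set x | v (x - a) <= r].

Definition spherically_complete (R : realType) (K : fieldType) (v : K -> R) : Prop :=
  forall (a : nat -> K) (r : nat -> R),
    (forall n, 0 < r n) ->
    (forall n, cball v (a n.+1) (r n.+1) `<=` cball v (a n) (r n)) ->
    exists x : K, forall n, cball v (a n) (r n) x.

(* (K, v) together with phi : A^eps -> K is a model of the complete residue
   field H(omega): K is a complete metrized field, phi is a ring morphism on
   A^eps with |phi x| = |x|_omega (so phi factors through an isometric
   embedding of A^eps / ker(omega), hence of its fraction field), and the
   fractions phi(a)/phi(b) are dense in K.  Such (K, v) is exactly the
   completion of Frac(A^eps/ker omega), unique up to isometric isomorphism. *)
Definition is_Homega (R : realType) (eps : nat -> R) (omega : set_system nat)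
  (K : fieldType) (v : K -> R) (phi : (nat -> R[i]) -> K) : Prop :=
  [/\ metrized_field_norm v /\ complete_for v,
      phi (fun _ => 1) = 1,
      (forall x y, Aeps eps x -> Aeps eps y ->
          phi (fun n => x n + y n) = phi x + phi y
       /\ phi (fun n => x n * y n) = phi x * phi y),
      (forall x, Aeps eps x -> v (phi x) = absw eps omega x)
    & (forall (z : K) (e : R), 0 < e -> exists a b,
          [/\ Aeps eps a, Aeps eps b, phi b != 0 & v (z - phi a / phi b) < e])].

(* Main.v *)
Require Import Defs.
From HB Require Import structures.
From mathcomp Require Import all_boot all_order all_algebra.
From mathcomp Require Import all_classical all_reals all_analysis.
From mathcomp Require Import complex.
From mathcomp Require Import ring lra.
Import Order.TTheory GRing.Theory Num.Theory.
Import numFieldTopology.Exports numFieldNormedType.Exports.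
Local Open Scope classical_set_scope.
Local Open Scope ring_scope.
Set Implicit Arguments.
Unset Strict Implicit.

Section CmodPow.
Variable R : realType.
Implicit Types (x y : R[i]) (a b p : R).

Lemma cmodE x : cmod x = Normc.normc x.
Proof. by case: x. Qed.

Lemma cmod_ge0 x : 0 <= cmod x.
Proof. exact: sqrtr_ge0. Qed.

Lemma cmodM x y : cmod (x * y) = cmod x * cmod y.
Proof. by rewrite !cmodE Normc.normcM. Qed.

Lemma cmodD x y : cmod (x + y) <= cmod x + cmod y.
Proof. by rewrite !cmodE le_normcD. Qed.

Lemma cmodN x : cmod (- x) = cmod x.
Proof. by rewrite !cmodE normcN. Qed.

Lemma cmod0 : cmod (0 : R[i]) = 0.
Proof. by rewrite cmodE Normc.normc0. Qed.

Lemma cmod1 : cmod (1 : R[i]) = 1.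
Proof. by rewrite cmodE Normc.normc1. Qed.

Lemma cmod_eq0 x : cmod x = 0 -> x = 0.
Proof. by rewrite cmodE => /Normc.eq0_normc. Qed.

Lemma cmodV x : cmod (x^-1) = (cmod x)^-1.
Proof. by rewrite !cmodE Normc.normcV. Qed.

Lemma cmodR a : cmod ((a%:C)%C) = `|a|.
Proof. by rewrite /cmod /= expr0n /= addr0 sqrtr_sqr. Qed.

Lemma cmodB x y : cmod (x - y) = cmod (y - x).
Proof. by rewrite -cmodN opprB. Qed.

Lemma cmod_sqr x : cmod x ^+ 2 = complex.Re x ^+ 2 + complex.Im x ^+ 2.
Proof. by rewrite /cmod sqr_sqrtr // addr_ge0 // sqr_ge0. Qed.

Lemma cmod_le_ReIm x : cmod x <= `|complex.Re x| + `|complex.Im x|.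
Proof.
rewrite -(ler_pXn2r (n := 2)) ?nnegrE ?cmod_ge0 ?addr_ge0 // cmod_sqr sqrrD.
rewrite !real_normK ?num_real // -addrA lerD2l -{1}(add0r (_ ^+ 2)) lerD2r.
by rewrite mulrn_wge0 // mulr_ge0.
Qed.

Lemma powR_le_self a p : 0 < p <= 1 -> 0 <= a <= 1 -> a <= a `^ p.
Proof.
move=> /andP[p0 p1] /andP[a0 a1]; have [->|an0] := eqVneq a 0; first exact: powR_ge0.
by apply: ger1_powR => //; rewrite lt_neqAle eq_sym an0 a0.
Qed.

Lemma powR_inv a p : 0 <= a -> (a^-1) `^ p = (a `^ p)^-1.
Proof.
move=> a0; have [->|an0] := eqVneq a 0.
  by rewrite invr0 /powR eqxx; case: (p == 0); rewrite ?invr1 ?invr0.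
have h : a `^ p * (a^-1) `^ p = 1 by rewrite -powRM ?invr_ge0 // divff // powR1.
have hp : a `^ p != 0 by rewrite powR_eq0 negb_and an0.
by apply: (mulfI hp); rewrite h divff.
Qed.

Lemma powR_subadd p a b : 0 < p <= 1 -> 0 <= a -> 0 <= b ->
  (a + b) `^ p <= a `^ p + b `^ p.
Proof.
move=> hp a0 b0; have p0 : p != 0 by case/andP: hp => /gt_eqF ->.
have [s0|] := eqVneq (a + b) 0.
  move/eqP: s0; rewrite paddr_eq0 // => /andP[/eqP -> /eqP ->].
  by rewrite addr0 powR0 // addr0.
set s := a + b => sn0.
have sp : 0 < s by rewrite lt_neqAle eq_sym sn0 addr_ge0.
have hq : (s^-1) `^ p * s `^ p = 1.
  by rewrite -powRM ?invr_ge0 ?ltW // mulVf // powR1.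
have ha : a / s <= a `^ p * (s^-1) `^ p.
  rewrite -powRM ?invr_ge0 ?(ltW sp) //; apply: powR_le_self => //.
  by rewrite divr_ge0 ?(ltW sp) //= ler_pdivrMr // mul1r lerDl.
have hb : b / s <= b `^ p * (s^-1) `^ p.
  rewrite -powRM ?invr_ge0 ?(ltW sp) //; apply: powR_le_self => //.
  by rewrite divr_ge0 ?(ltW sp) //= ler_pdivrMr // mul1r lerDr.
have : 1 <= (a `^ p + b `^ p) * (s^-1) `^ p.
  by rewrite mulrDl -[1](@divff _ s) // mulrDl; apply: lerD.
move/(ler_wpM2r (powR_ge0 s p)); rewrite mul1r -mulrA hq mulr1 //.
Qed.

Lemma powR_mono p a b : 0 <= p -> 0 <= a <= b -> a `^ p <= b `^ p.
Proof.
move=> p0 /andP[a0 ab]; apply: ge0_ler_powR => //;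
  rewrite nnegrE ?(le_trans a0 ab) //.
Qed.

End CmodPow.
Set Implicit Arguments.
Unset Strict Implicit.

Lemma ultra_fmap (T U : Type) (F : set_system T) (f : T -> U) :
  UltraFilter F -> UltraFilter (f @ F).
Proof.
move=> FU; split; first exact: fmap_proper_filter.
move=> G GP sFG; rewrite eqEsubset; split => [A GA|]; last exact: sFG.
have [//|FnA] := in_ultra_setVsetC (f @^-1` A) FU.
have GnA : G (~` A) by apply: sFG.
have : G (A `&` ~` A) by apply: filterI.
by rewrite setICr => /(@filter_ex _ _ GP)[x].
Qed.

Section ULim.
Variable R : realType.
Variable F : set_system nat.
Hypothesis FU : UltraFilter F.

Lemma ulim_cvg (u : nat -> R) M :
  (\forall n \near F, `|u n| <= M) -> u @ F --> ulim F u.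
Proof.
move=> hM.
have FUu : UltraFilter (u @ F) by exact: ultra_fmap.
have := @segment_compact R (- M) M; rewrite compact_ultra => /(_ _ FUu).
case.
  apply: filterS hM => n /=; rewrite in_itv /= => h.
  by rewrite -ler_norml.
move=> p [_ up]; by rewrite /ulim (cvg_lim _ up).
Qed.

Lemma ulim_le (u : nat -> R) M c :
  (\forall n \near F, `|u n| <= M) -> (\forall n \near F, u n <= c) -> ulim F u <= c.
Proof. by move=> /ulim_cvg hc hle; apply: (cvgr_to_le hc). Qed.

Lemma ulim_ge (u : nat -> R) M c :
  (\forall n \near F, `|u n| <= M) -> (\forall n \near F, c <= u n) -> c <= ulim F u.
Proof. by move=> /ulim_cvg hc hle; apply: (cvgr_to_ge hc). Qed.

Lemma ulim_lt (u : nat -> R) M c :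
  (\forall n \near F, `|u n| <= M) -> ulim F u < c -> \forall n \near F, u n < c.
Proof. by move=> /ulim_cvg hc; apply: (cvgr_lt _ hc). Qed.

Lemma ulim_gt (u : nat -> R) M c :
  (\forall n \near F, `|u n| <= M) -> c < ulim F u -> \forall n \near F, c < u n.
Proof. by move=> /ulim_cvg hc; apply: (cvgr_gt _ hc). Qed.

Lemma ulim_cst (c : R) : ulim F (fun _ => c) = c.
Proof. by rewrite /ulim; apply: cvg_lim => //; exact: cvg_cst. Qed.

Lemma ulim_eq (u w : nat -> R) :
  (\forall n \near F, u n = w n) -> ulim F u = ulim F w.
Proof.
move=> h; rewrite /ulim; congr lim; rewrite predeqE => A; split => /=.
  by move=> hA; apply: filterS2 h hA => n /= ->.
by move=> hA; apply: filterS2 h hA => n /= <-.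
Qed.

Lemma ulim_le_mono (u w : nat -> R) M :
  (\forall n \near F, `|u n| <= M) -> (\forall n \near F, `|w n| <= M) ->
  (\forall n \near F, u n <= w n) -> ulim F u <= ulim F w.
Proof.
move=> /ulim_cvg hu /ulim_cvg hw h.
have hd : (w - u) @ F --> ulim F w - ulim F u by apply: cvgB.
rewrite -subr_ge0; apply: (cvgr_to_ge hd).
by apply: filterS h => n /=; rewrite subr_ge0.
Qed.

Lemma Re_le_cmod (x : R[i]) : `|complex.Re x| <= cmod x.
Proof.
rewrite /cmod -sqrtr_sqr ler_sqrt ?addr_ge0 ?sqr_ge0 //.
by rewrite lerDl sqr_ge0.
Qed.

Lemma Im_le_cmod (x : R[i]) : `|complex.Im x| <= cmod x.
Proof.
rewrite /cmod -sqrtr_sqr ler_sqrt ?addr_ge0 ?sqr_ge0 //.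
by rewrite lerDr sqr_ge0.
Qed.

Definition clim (c : nat -> R[i]) : R[i] :=
  ((ulim F (fun m => complex.Re (c m))) +i* (ulim F (fun m => complex.Im (c m))))%C.

Lemma clim_close (c : nat -> R[i]) B d rho :
  (\forall m \near F, cmod (c m) <= B) -> 0 <= rho ->
  (\forall m \near F, cmod (c m - d) <= rho) -> cmod (clim c - d) <= rho.
Proof.
move=> hB rho0 hrho.
have hre : (fun m => complex.Re (c m)) @ F --> ulim F (fun m => complex.Re (c m)).
  by apply: (@ulim_cvg _ B); apply: filterS hB => m; apply: le_trans; apply: Re_le_cmod.
have him : (fun m => complex.Im (c m)) @ F --> ulim F (fun m => complex.Im (c m)).
  by apply: (@ulim_cvg _ B); apply: filterS hB => m; apply: le_trans; apply: Im_le_cmod.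
set Lr := ulim F _ in hre; set Li := ulim F _ in him.
have hg : (fun m => (complex.Re (c m) - complex.Re d) * (complex.Re (c m) - complex.Re d)
   + (complex.Im (c m) - complex.Im d) * (complex.Im (c m) - complex.Im d)) @ F -->
   (Lr - complex.Re d) * (Lr - complex.Re d) + (Li - complex.Im d) * (Li - complex.Im d).
  apply: cvgD; apply: cvgM; apply: cvgB => //; exact: cvg_cst.
rewrite -(ler_pXn2r (n := 2)) ?nnegrE ?cmod_ge0 //.
have -> : cmod (clim c - d) ^+ 2 = (Lr - complex.Re d) * (Lr - complex.Re d)
   + (Li - complex.Im d) * (Li - complex.Im d).
  by rewrite cmod_sqr; case: d {hg hrho} => a' b' /=; rewrite !expr2.
apply: (cvgr_to_le hg); apply: filterS hrho => m /= h.
have := h; rewrite -(ler_pXn2r (n := 2)) ?nnegrE ?cmod_ge0 // cmod_sqr.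
by case: (c m) => a b; case: d {h hg} => a' b' /=; rewrite !expr2.
Qed.

Lemma clim_near (c : nat -> R[i]) B eta :
  (\forall m \near F, cmod (c m) <= B) -> 0 < eta ->
  \forall m \near F, cmod (c m - clim c) < eta.
Proof.
move=> hB eta0.
have hre : (fun m => complex.Re (c m)) @ F --> ulim F (fun m => complex.Re (c m)).
  by apply: (@ulim_cvg _ B); apply: filterS hB => m; apply: le_trans; apply: Re_le_cmod.
have him : (fun m => complex.Im (c m)) @ F --> ulim F (fun m => complex.Im (c m)).
  by apply: (@ulim_cvg _ B); apply: filterS hB => m; apply: le_trans; apply: Im_le_cmod.
set Lr := ulim F _ in hre; set Li := ulim F _ in him.
have e2 : 0 < eta / 2 by rewrite divr_gt0.
have l1 : Lr < Lr + eta / 2 by rewrite ltrDl.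
have l2 : Lr - eta / 2 < Lr by rewrite gtrDl oppr_lt0.
have l3 : Li < Li + eta / 2 by rewrite ltrDl.
have l4 : Li - eta / 2 < Li by rewrite gtrDl oppr_lt0.
have h1 := cvgr_lt _ hre _ l1.
have h2 := cvgr_gt _ hre _ l2.
have h3 := cvgr_lt _ him _ l3.
have h4 := cvgr_gt _ him _ l4.
near=> m.
apply: (le_lt_trans (cmod_le_ReIm _)).
have -> : complex.Re (c m - clim c) = complex.Re (c m) - Lr by case: (c m).
have -> : complex.Im (c m - clim c) = complex.Im (c m) - Li by case: (c m).
rewrite [eta]splitr; apply: ltrD; rewrite distrC ltr_distlC; apply/andP; split.
- by near: m; apply: h2.
- by near: m; apply: h1.
- by near: m; apply: h4.
- by near: m; apply: h3.
Unshelve. all: by end_near.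
Qed.

End ULim.

Set Implicit Arguments.
Unset Strict Implicit.
Lemma le_of_inv (R : realType) (X c : R) N :
  (forall j, (N <= j)%N -> X <= c + (j.+1%:R)^-1) -> X <= c.
Proof.
move=> h; apply/ler_addgt0Pr => d d0.
have b0 : 0 <= d^-1 by rewrite invr_ge0 ltW.
pose j := (N + Num.bound (d^-1))%N.
apply: le_trans (h j (leq_addr _ _)) _; rewrite lerD2l.
have hb := archi_boundP b0.
rewrite -[d]invrK lef_pV2 ?posrE ?invr_gt0 ?ltr0n //.
apply: le_trans (ltW hb) _; rewrite ler_nat /j; apply: leqW; apply: leq_addl.
Qed.

Set Default Proof Using "All".
Section Main.
Variable R : realType.
Variable eps : nat -> R.
Hypothesis heps : forall n, 0 < eps n <= 1.
Variable omega : set_system nat.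
Hypothesis homega : UltraFilter omega.
Variable K : fieldType.
Variable v : K -> R.
Variable phi : (nat -> R[i]) -> K.
Hypothesis hK : is_Homega eps omega v phi.

Definition pw n (z : R[i]) := cmod z `^ eps n.

Lemma alw (P : nat -> Prop) : (forall n, P n) -> \forall n \near omega, P n.
Proof. by move=> h; apply: filterS filterT => n _; exact: h. Qed.

Lemma pw_ge0 n z : 0 <= pw n z.
Proof. exact: powR_ge0. Qed.

Lemma eps_neq0 n : eps n != 0.
Proof. by have /andP[/gt_eqF -> _] := heps n. Qed.

Lemma pwM n x y : pw n (x * y) = pw n x * pw n y.
Proof. by rewrite /pw cmodM powRM // cmod_ge0. Qed.

Lemma pwD n x y : pw n (x + y) <= pw n x + pw n y.
Proof.
rewrite /pw; apply: le_trans (powR_subadd (heps n) (cmod_ge0 _) (cmod_ge0 _)).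
apply: powR_mono; first by case/andP: (heps n) => /ltW.
by rewrite cmod_ge0 cmodD.
Qed.

Lemma pw0 n : pw n 0 = 0.
Proof. by rewrite /pw cmod0 powR0 // eps_neq0. Qed.

Lemma pw1 n : pw n 1 = 1.
Proof. by rewrite /pw cmod1 powR1. Qed.

Lemma pwN n x : pw n (- x) = pw n x.
Proof. by rewrite /pw cmodN. Qed.

Lemma pwB n x y : pw n (x - y) = pw n (y - x).
Proof. by rewrite -pwN opprB. Qed.

Lemma pw_eq0 n x : pw n x = 0 -> x = 0.
Proof. by move/powR_eq0_eq0/cmod_eq0. Qed.

Lemma pw_le n x : pw n x <= 1 + cmod x.
Proof.
have [e0 e1] := andP (heps n).
have [h|h] := leP (cmod x) 1.
  have h1 : pw n x <= 1 `^ eps n by apply: powR_mono; rewrite ?cmod_ge0 ?h // ltW.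
  by apply: le_trans h1 _; rewrite powR1 lerDl cmod_ge0.
apply: le_trans (_ : cmod x <= _); last by rewrite lerDr.
by apply: ler1_powR => //; apply: ltW.
Qed.

Lemma pw_lt_le n x y : cmod x <= cmod y -> pw n x <= pw n y.
Proof.
move=> h; apply: powR_mono; first by case/andP: (heps n) => /ltW.
by rewrite cmod_ge0.
Qed.

Lemma Acst z : Aeps eps (fun _ => z).
Proof. by exists (1 + cmod z) => n; apply: pw_le. Qed.

Lemma AD x y : Aeps eps x -> Aeps eps y -> Aeps eps (fun n => x n + y n).
Proof.
move=> [M hM] [N hN]; rewrite /Aeps /=; exists (M + N) => n.
by apply: le_trans (pwD n _ _) _; apply: lerD; [exact: hM | exact: hN].
Qed.

Lemma AM x y : Aeps eps x -> Aeps eps y -> Aeps eps (fun n => x n * y n).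
Proof.
move=> [M hM] [N hN]; rewrite /Aeps /=; exists (M * N) => n.
rewrite -/(pw n _) pwM; apply: ler_pM; [exact: pw_ge0 | exact: pw_ge0 | exact: hM | exact: hN].
Qed.

Lemma AN x : Aeps eps x -> Aeps eps (fun n => - x n).
Proof. by move=> [M hM]; rewrite /Aeps /=; exists M => n; rewrite -/(pw n _) pwN; exact: hM. Qed.

Lemma AB x y : Aeps eps x -> Aeps eps y -> Aeps eps (fun n => x n - y n).
Proof. by move=> hx hy; exact: (AD hx (AN hy)). Qed.

Lemma Abnd x : Aeps eps x -> exists M, \forall n \near omega, `|pw n (x n)| <= M.
Proof.
by move=> [M hM]; exists M; apply: alw => n; rewrite ger0_norm ?pw_ge0 //; apply: hM.
Qed.

Lemma v_ge0 x : 0 <= v x.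
Proof. by case: hK => [[[h _ _ _] _] _ _ _ _]. Qed.

Lemma v_eq0 x : v x = 0 <-> x = 0.
Proof. by case: hK => [[[_ h _ _] _] _ _ _ _]. Qed.

Lemma vM x y : v (x * y) = v x * v y.
Proof. by case: hK => [[[_ _ h _] _] _ _ _ _]. Qed.

Lemma vD x y : v (x + y) <= v x + v y.
Proof. by case: hK => [[[_ _ _ h] _] _ _ _ _]. Qed.

Lemma v1 : v 1 = 1.
Proof.
have h : v 1 = v 1 * v 1 by rewrite -vM mulr1.
have n0 : v 1 != 0 by apply/eqP => /v_eq0/eqP; rewrite oner_eq0.
by apply: (mulfI n0); rewrite -h mulr1.
Qed.

Lemma vN x : v (- x) = v x.
Proof.
have h : v (-1) * v (-1) = 1 by rewrite -vM mulrNN mulr1 v1.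
have hp : v (-1) = 1.
  have := v_ge0 (-1); move: h; set a := v (-1) => h a0.
  have : (a - 1) * (a + 1) = 0 by rewrite mulrDr mulr1 mulrBl h mul1r addrA subrK subrr.
  move/eqP; rewrite mulf_eq0 => /orP[]; first by rewrite subr_eq0 => /eqP.
  by rewrite addr_eq0 => /eqP ha; move: a0; rewrite ha oppr_ge0 ler10.
by rewrite -mulN1r vM hp mul1r.
Qed.

Lemma vB x y : v (x - y) = v (y - x).
Proof. by rewrite -vN opprB. Qed.

Lemma v_compl : complete_for v.
Proof. by case: hK => [[_ h] _ _ _ _]. Qed.

Lemma phi1 : phi (fun _ => 1) = 1.
Proof. by case: hK. Qed.

Lemma phiD x y : Aeps eps x -> Aeps eps y -> phi (fun n => x n + y n) = phi x + phi y.
Proof. by case: hK => _ _ h _ _ hx hy; case: (h x y hx hy). Qed.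

Lemma phiM x y : Aeps eps x -> Aeps eps y -> phi (fun n => x n * y n) = phi x * phi y.
Proof. by case: hK => _ _ h _ _ hx hy; case: (h x y hx hy). Qed.

Lemma vphi x : Aeps eps x -> v (phi x) = ulim omega (fun n => pw n (x n)).
Proof. by case: hK => _ _ _ h _ hx; rewrite h. Qed.

Lemma phi_dense (z : K) (e : R) : 0 < e -> exists a b,
  [/\ Aeps eps a, Aeps eps b, phi b != 0 & v (z - phi a / phi b) < e].
Proof. by case: hK => _ _ _ _ h; apply: h. Qed.

Lemma phi0 : phi (fun _ => 0) = 0.
Proof.
have h := phiD (Acst 0) (Acst 0).
have : phi (fun _ => 0) + phi (fun _ => 0) = phi (fun _ => 0) + 0.
  by rewrite addr0 -h; congr phi; apply: funext => n; rewrite addr0.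
by move/addrI.
Qed.

Lemma phiN x : Aeps eps x -> phi (fun n => - x n) = - phi x.
Proof.
move=> hx; apply/eqP; rewrite -addr_eq0 addrC -(phiD hx (AN hx)).
by apply/eqP; rewrite -phi0; congr phi; apply: funext => n; rewrite addrN.
Qed.

Lemma phiB x y : Aeps eps x -> Aeps eps y -> phi (fun n => x n - y n) = phi x - phi y.
Proof. by move=> hx hy; rewrite (phiD hx (AN hy)) (phiN hy). Qed.

Lemma vphiB x y : Aeps eps x -> Aeps eps y ->
  v (phi x - phi y) = ulim omega (fun n => pw n (x n - y n)).
Proof. by move=> hx hy; rewrite -(phiB hx hy) (vphi (AB hx hy)). Qed.

Lemma vphiB_le x y c : Aeps eps x -> Aeps eps y ->
  (\forall n \near omega, pw n (x n - y n) <= c) -> v (phi x - phi y) <= c.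
Proof.
move=> hx hy h; rewrite vphiB //.
have [M hM] := Abnd (AB hx hy); exact: ulim_le hM h.
Qed.

Lemma phi_eq x y : Aeps eps x -> Aeps eps y ->
  (\forall n \near omega, x n = y n) -> phi x = phi y.
Proof.
move=> hx hy h; apply/eqP; rewrite -subr_eq0; apply/eqP/v_eq0/eqP.
rewrite eq_le v_ge0 andbT; apply: vphiB_le => //.
by apply: filterS h => n ->; rewrite subrr pw0.
Qed.



Lemma phi_inv b : Aeps eps b -> phi b != 0 -> exists c, Aeps eps c /\ phi b * phi c = 1.
Proof.
move=> hb nb.
have s0 : 0 < v (phi b).
  rewrite lt_neqAle v_ge0 andbT eq_sym; apply/eqP => /v_eq0 h.
  by move: nb; rewrite h eqxx.
rewrite (vphi hb) in s0; set s := ulim _ _ in s0.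
have [M hM] := Abnd hb.
have hs : \forall n \near omega, s / 2 < pw n (b n).
  apply: (@ulim_gt _ _ homega _ M) => //; rewrite -/s ltr_pdivrMr // ltr_pMr // ltr1n //.
pose c n := if s / 2 <= pw n (b n) then (b n)^-1 else 0.
have hc : Aeps eps c.
  rewrite /Aeps /=; exists (s / 2)^-1 => n; rewrite /c.
  case: ifP => h.
    rewrite -/(pw n _) /pw cmodV powR_inv ?cmod_ge0 // lef_pV2 ?posrE //.
      by apply: lt_le_trans h; rewrite divr_gt0.
    by rewrite divr_gt0.
  by rewrite -/(pw n _) pw0 // invr_ge0 divr_ge0 // ltW.
exists c; split => //; rewrite -phiM // -phi1.
apply: (phi_eq (AM hb hc) (Acst 1)).
apply: filterS hs => n h; rewrite /c ifT; last by apply: ltW.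
rewrite mulfV //; apply/eqP => b0; move: h; rewrite b0 pw0 //.
by rewrite ltNge divr_ge0 // ltW.
Qed.

Lemma phi_approx (z : K) (e : R) : 0 < e -> exists a, Aeps eps a /\ v (z - phi a) < e.
Proof.
move=> e0; have [a [b [ha hb nb hv]]] := phi_dense z e0.
have [c [hc hbc]] := phi_inv hb nb.
exists (fun n => a n * c n); split; first by apply: AM.
rewrite phiM //.
have -> : phi c = (phi b)^-1 by apply: (mulfI nb); rewrite hbc mulfV.
exact: hv.
Qed.

Lemma fin_forall (P : nat -> set nat) j :
  (forall k, (k <= j)%N -> omega (P k)) ->
  omega [set n | forall k, (k <= j)%N -> P k n].
Proof.
elim: j => [|j IH] h.
  by apply: filterS (h 0%N (leqnn _)) => n hn k; rewrite leqn0 => /eqP ->.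
have h1 := IH (fun k hk => h k (leqW hk)).
have h2 := h j.+1 (leqnn _).
apply: filterS (filterI h1 h2) => n [hn1 hn2] k; rewrite leq_eqVlt => /orP[/eqP -> //|].
by rewrite ltnS; apply: hn1.
Qed.

Lemma nonprinc : ulim omega eps = 0 -> forall m, omega [set n | (m <= n)%N].
Proof.
move=> e0 m.
have [//|hC] := in_ultra_setVsetC [set n | (m <= n)%N] homega.
have [d [d0 hd]] : exists d : R, 0 < d /\ forall n, (n < m)%N -> d <= eps n.
  elim: m {hC} => [|m [d [d0 hd]]]; first by exists 1; split => // n.
  exists (Num.min d (eps m)); split; first by rewrite lt_min d0; case/andP: (heps m).
  move=> n; rewrite ltnS leq_eqVlt => /orP[/eqP ->|hn]; first by rewrite ge_min lexx orbT.
  by rewrite ge_min hd.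
have : d <= ulim omega eps.
  apply: (@ulim_ge _ _ homega _ 1).
    by apply: alw => n; have /andP[a b] := heps n; rewrite ger0_norm // ltW.
  by apply: filterS hC => n /= hn; apply: hd; rewrite ltnNge; apply/negP.
by rewrite e0 leNgt d0.
Qed.

Section Diag.
Hypothesis hnp : forall m, omega [set n | (m <= n)%N].

Lemma diag (al : nat -> nat -> R[i]) (c : nat -> R) :
  (forall m, Aeps eps (al m)) ->
  (forall k m, (k <= m)%N -> v (phi (al m) - phi (al k)) <= c k) ->
  exists x, Aeps eps x /\ forall k, v (phi x - phi (al k)) <= c k.
Proof.
move=> hA hc.
pose S m := [set n | (m <= n)%N /\
  forall k, (k <= m)%N -> pw n (al m n - al k n) < c k + (m.+1%:R)^-1].
have hS : forall m, omega (S m).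
  move=> m; apply: filterS (filterI (hnp m) (@fin_forall
     (fun k => [set n | pw n (al m n - al k n) < c k + (m.+1%:R)^-1]) m _)).
    by move=> n [h1 h2]; split.
  move=> k hk; have [M hM] := Abnd (AB (hA m) (hA k)).
  apply: (@ulim_lt _ _ homega _ M) => //; rewrite -vphiB //.
  by apply: le_lt_trans (hc k m hk) _; rewrite ltrDl invr_gt0 ltr0n.
pose g := fun n => fix g k := if k is k'.+1 then
   (if `[< S k n >] then k else g k') else 0%N.
have gP : forall n k, (g n k = 0%N \/ S (g n k) n) /\
    (forall j, (1 <= j <= k)%N -> S j n -> (j <= g n k)%N).
  move=> n; elim => [|k [IH1 IH2]].
    by split; [left | move=> j /andP[a b]; move: (leq_trans a b)].
  rewrite /=; case: (boolP `[< S k.+1 n >]) => [/asboolP hk|/asboolP hk].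
    by split; [right | move=> j /andP[_ ->]].
  split => //; move=> j /andP[j1]; rewrite leq_eqVlt => /orP[/eqP ->|hj] hSj.
    by [].
  by apply: IH2 => //; rewrite j1 -ltnS.
pose m n := g n n.
pose x n := al (m n) n.
have [M0 hM0] := hA 0%N.
have hx : Aeps eps x.
  rewrite /Aeps /=; exists (M0 + (`|c 0%N| + 1)) => n.
  have M0p : 0 <= M0 by apply: le_trans (hM0 0%N); apply: powR_ge0.
  have [h|h] := (gP n n).1; rewrite /x /m.
    by rewrite h; apply: le_trans (hM0 n) _; rewrite lerDl addr_ge0.
  have -> : al (g n n) n = (al (g n n) n - al 0%N n) + al 0%N n by rewrite subrK.
  apply: le_trans (pwD _ _ _) _; rewrite addrC; apply: lerD; first exact: hM0.
  apply: ltW; apply: lt_le_trans (h.2 0%N (leq0n _)) _.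
  apply: lerD; first by apply: ler_norm.
  by rewrite invf_le1 ?ltr0n // ler1n.
exists x; split => // k.
apply: (@le_of_inv _ _ _ (maxn k 1)) => j hj.
apply: vphiB_le => //.
apply: filterS (hS j) => n [hjn hSn].
have j1 : (1 <= j)%N by apply: leq_trans hj; apply: leq_maxr.
have kj : (k <= j)%N by apply: leq_trans hj; apply: leq_maxl.
have hm : (j <= m n)%N by apply: (gP n n).2 => //; rewrite j1.
have [h0|hSm] := (gP n n).1.
  by move: hm; rewrite /m h0 leqn0 => /eqP j0; move: j1; rewrite j0.
apply: ltW; apply: lt_le_trans (hSm.2 k (leq_trans kj hm)) _.
rewrite lerD2l lef_pV2 ?posrE ?ltr0n // ler_nat ltnS; exact: hm.
Qed.

End Diag.
Lemma vtri a b c : v (a - c) <= v (a - b) + v (b - c).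
Proof. by have := vD (a - b) (b - c); rewrite addrA subrK. Qed.

Definition ee := ulim omega eps.

Lemma eps_bnd : \forall n \near omega, `|eps n| <= 1.
Proof. by apply: alw => n; have /andP[a b] := heps n; rewrite ger0_norm // ltW. Qed.

Lemma ee_cvg : eps @ omega --> ee.
Proof. exact: (ulim_cvg homega eps_bnd). Qed.

Lemma ee_ge0 : 0 <= ee.
Proof.
apply: (ulim_ge homega eps_bnd); apply: alw => n.
by case/andP: (heps n) => /ltW.
Qed.

Lemma le_of_invn (X c : R) N C :
  (forall j, (N <= j)%N -> X <= c + (j.+1%:R)^-1 *+ C) -> X <= c.
Proof.
move=> h; apply/ler_addgt0Pr => d d0.
have b0 : 0 <= C%:R / d by rewrite divr_ge0 // ltW.
pose j := (N + Num.bound (C%:R / d))%N.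
apply: le_trans (h j (leq_addr _ _)) _; rewrite lerD2l.
have hb := archi_boundP b0.
have : C%:R / d <= j.+1%:R.
  by apply: le_trans (ltW hb) _; rewrite ler_nat /j; apply: leqW; apply: leq_addl.
rewrite ler_pdivrMr // => hC.
rewrite -[_ *+ C]mulr_natr mulrC ler_pdivrMr ?ltr0n // mulrC; exact: hC.
Qed.

Lemma surj0 : ee = 0 -> forall z : K, exists a, Aeps eps a /\ phi a = z.
Proof.
move=> e0 z.
have hnp := nonprinc e0.
have /choice[al hal] : forall k : nat, exists a, Aeps eps a /\ v (z - phi a) < (k.+1%:R)^-1.
  by move=> k; apply: phi_approx; rewrite invr_gt0 ltr0n.
have hA : forall m, Aeps eps (al m) by move=> m; exact: (hal m).1.
have hc : forall k m, (k <= m)%N -> v (phi (al m) - phi (al k)) <= (k.+1%:R)^-1 *+ 2.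
  move=> k m km; apply: le_trans (vtri _ z _) _; rewrite vB mulr2n.
  apply: lerD; last exact: ltW (hal k).2.
  apply: le_trans (ltW (hal m).2) _.
  by rewrite lef_pV2 ?posrE ?ltr0n // ler_nat ltnS.
have [x [hx hxk]] := diag hnp hA hc.
exists x; split => //; apply/eqP; rewrite -subr_eq0; apply/eqP/v_eq0/eqP.
rewrite eq_le v_ge0 andbT.
apply: (@le_of_invn _ 0 0 3) => j _; rewrite add0r.
apply: le_trans (vtri _ (phi (al j)) _) _.
rewrite [v (phi (al j) - z)]vB.
apply: le_trans (lerD (hxk j) (ltW (hal j).2)) _.
by rewrite -mulrSr.
Qed.


Lemma range_v : range v = [set r : R | 0 <= r].
Proof.
apply/seteqP; split => [_ [z _ <-]|r r0]; first exact: v_ge0.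
pose x n := ((r `^ (eps n)^-1)%:C)%C.
have hpw : forall n, pw n (x n) = r.
  move=> n; rewrite /pw /x cmodR ger0_norm ?powR_ge0 // -powRrM mulVf ?eps_neq0 //.
  by rewrite powRr1.
have hx : Aeps eps x by rewrite /Aeps /=; exists r => n; rewrite -/(pw n _) hpw.
exists (phi x) => //; rewrite (vphi hx).
have -> : (fun n => pw n (x n)) = (fun _ => r) by apply: funext => n; exact: hpw.
exact: ulim_cst.
Qed.

Lemma cmodX (y : R[i]) k : cmod (y ^+ k) = cmod y ^+ k.
Proof. by elim: k => [|k IH]; rewrite ?expr0 ?cmod1 // !exprS cmodM IH. Qed.

Lemma cmod_sum k (c : nat -> R[i]) : cmod (\sum_(i < k) c i) <= \sum_(i < k) cmod (c i).
Proof.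
elim: k => [|k IH]; first by rewrite !big_ord0 cmod0.
rewrite !big_ord_recr /=; apply: le_trans (cmodD _ _) _; exact: lerD.
Qed.

Lemma cauchy_bound (y : R[i]) (c : nat -> R[i]) n :
  y ^+ n = \sum_(i < n) c i * y ^+ i -> cmod y <= 1 + \sum_(i < n) cmod (c i).
Proof.
move=> hy.
have S0 : 0 <= \sum_(i < n) cmod (c i) by apply: sumr_ge0 => i _; exact: cmod_ge0.
have [h|h] := leP (cmod y) 1; first by apply: le_trans h _; rewrite lerDl.
case: n hy S0 => [|n] hy S0.
  by move: hy; rewrite expr0 big_ord0 => /eqP; rewrite oner_eq0.
apply: le_trans (_ : _ <= \sum_(i < n.+1) cmod (c i)) _; last by rewrite lerDr.
have a0 : 0 < cmod y ^+ n by rewrite exprn_gt0 // (lt_trans ltr01 h).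
rewrite -(ler_pM2r a0) -exprS -[cmod y ^+ n.+1]cmodX hy.
apply: le_trans (cmod_sum n.+1 (fun i => c i * y ^+ i)) _.
rewrite mulr_suml; apply: ler_sum => i _.
rewrite cmodM cmodX; apply: ler_wpM2l; first exact: cmod_ge0.
by rewrite ler_eXn2l // -ltnS.
Qed.

Lemma powR_subadd_sum p k (a : nat -> R) : 0 < p <= 1 -> (forall i, 0 <= a i) ->
  (1 + \sum_(i < k) a i) `^ p <= 1 + \sum_(i < k) a i `^ p.
Proof.
move=> hp ha; elim: k => [|k IH]; first by rewrite !big_ord0 addr0 powR1.
rewrite !big_ord_recr /= !addrA.
apply: le_trans (powR_subadd hp _ (ha k)) _.
  by rewrite addr_ge0 // sumr_ge0.
exact: lerD.
Qed.

Lemma AX x k : Aeps eps x -> Aeps eps (fun t => x t ^+ k).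
Proof.
move=> hx; elim: k => [|k IH].
  have -> : (fun t => x t ^+ 0) = (fun _ => 1) by apply: funext => t; rewrite expr0.
  exact: Acst.
have -> : (fun t => x t ^+ k.+1) = (fun t => x t * x t ^+ k) by apply: funext => t; rewrite exprS.
exact: AM hx IH.
Qed.

Lemma phiX x k : Aeps eps x -> phi (fun t => x t ^+ k) = phi x ^+ k.
Proof.
move=> hx; elim: k => [|k IH].
  have -> : (fun t => x t ^+ 0) = (fun _ => 1) by apply: funext => t; rewrite expr0.
  by rewrite phi1 expr0.
have -> : (fun t => x t ^+ k.+1) = (fun t => x t * x t ^+ k) by apply: funext => t; rewrite exprS.
by rewrite (phiM hx (AX k hx)) IH exprS.
Qed.

Lemma Asum k (F : nat -> nat -> R[i]) : (forall i, Aeps eps (F i)) ->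
  Aeps eps (fun t => \sum_(i < k) F i t).
Proof.
move=> hF; elim: k => [|k IH].
  have -> : (fun t => \sum_(i < 0) F i t) = (fun _ => 0) by apply: funext => t; rewrite big_ord0.
  exact: Acst.
have -> : (fun t => \sum_(i < k.+1) F i t) = (fun t => \sum_(i < k) F i t + F k t).
  by apply: funext => t; rewrite big_ord_recr.
exact: AD IH (hF k).
Qed.

Lemma phi_sum k (F : nat -> nat -> R[i]) : (forall i, Aeps eps (F i)) ->
  phi (fun t => \sum_(i < k) F i t) = \sum_(i < k) phi (F i).
Proof.
move=> hF; elim: k => [|k IH].
  have -> : (fun t => \sum_(i < 0) F i t) = (fun _ => 0) by apply: funext => t; rewrite big_ord0.
  by rewrite phi0 big_ord0.
have -> : (fun t => \sum_(i < k.+1) F i t) = (fun t => \sum_(i < k) F i t + F k t).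
  by apply: funext => t; rewrite big_ord_recr.
by rewrite (phiD (Asum k hF) (hF k)) IH big_ord_recr.
Qed.

Section Surj.
Hypothesis surj : forall z : K, exists a, Aeps eps a /\ phi a = z.

Lemma closedK : GRing.closed_field_axiom K.
Proof.
move=> n P n0.
have /choice[p hp] : forall i, exists a, Aeps eps a /\ phi a = P i by move=> i; exact: surj.
have /choice[M hM] : forall i, exists M, forall t, pw t (p i t) <= M.
  by move=> i; have [M hM] := (hp i).1; exists M.
have /choice[x hx] : forall t, exists y : R[i], y ^+ n = \sum_(i < n) p i t * y ^+ i.
  by move=> t; exact: (@solve_monicpoly _ n (fun i => p i t) n0).
have hA : forall i, Aeps eps (p i) by move=> i; exact: (hp i).1.
have xA : Aeps eps x.
  rewrite /Aeps /=; exists (1 + \sum_(i < n) M i) => t.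
  rewrite -/(pw t _).
  apply: le_trans (pw_lt_le t (_ : cmod (x t) <= cmod ((1 + \sum_(i < n) cmod (p i t))%:C)%C)) _.
    rewrite cmodR ger0_norm; first exact: (@cauchy_bound (x t) (fun i => p i t) n (hx t)).
    by rewrite addr_ge0 // sumr_ge0 // => i _; exact: cmod_ge0.
  rewrite /pw cmodR ger0_norm; last by rewrite addr_ge0 // sumr_ge0 // => i _; exact: cmod_ge0.
  apply: le_trans (powR_subadd_sum _ (heps t) (fun i => cmod_ge0 (p i t))) _.
  by rewrite lerD2l; apply: ler_sum => i _; exact: hM.
exists (phi x).
have hF : forall i, Aeps eps (fun t => p i t * x t ^+ i) by move=> i; exact: AM (hA i) (AX i xA).
rewrite -(phiX n xA).
have -> : (fun t => x t ^+ n) = (fun t => \sum_(i < n) p i t * x t ^+ i).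
  by apply: funext => t; exact: hx.
rewrite (phi_sum n hF); apply: eq_bigr => i _.
by rewrite (phiM (hA i) (AX i xA)) (phiX i xA) (hp i).2.
Qed.

End Surj.


Lemma ball_chain (a : nat -> K) (r : nat -> R) :
  (forall n, 0 < r n) ->
  (forall n, cball v (a n.+1) (r n.+1) `<=` cball v (a n) (r n)) ->
  forall k m, (k <= m)%N -> v (a m - a k) <= r k.
Proof.
move=> hr hinc k m km.
have hch : forall d k, cball v (a (k + d)%N) (r (k + d)%N) `<=` cball v (a k) (r k).
  elim => [|d IH] k'; first by rewrite addn0.
  by rewrite addnS; apply: subset_trans (hinc _) (IH k').
have := hch (m - k)%N k; rewrite subnKC // => /(_ (a m)); apply.
by rewrite /cball /= subrr (proj2 (v_eq0 0) erefl) ltW.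
Qed.

Lemma sph0 : ee = 0 -> spherically_complete v.
Proof.
move=> e0 a r hr hinc.
have hnp := nonprinc e0.
have /choice[al hal] : forall k, exists x, Aeps eps x /\ phi x = a k by move=> k; exact: surj0.
have hA : forall m, Aeps eps (al m) by move=> m; exact: (hal m).1.
have hc : forall k m, (k <= m)%N -> v (phi (al m) - phi (al k)) <= r k.
  by move=> k m km; rewrite !(hal _).2; exact: ball_chain.
have [x [hx hxk]] := diag hnp hA hc.
by exists (phi x) => n; rewrite /cball /= -(hal n).2; exact: hxk.
Qed.

Lemma nonarch0 : ee = 0 -> non_archimedean v.
Proof.
move=> e0 z1 z2.
have [x1 [h1 <-]] := surj0 e0 z1; have [x2 [h2 <-]] := surj0 e0 z2.
rewrite -(phiD h1 h2) (vphi (AD h1 h2)) (vphi h1) (vphi h2).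
have [M1 hM1] := Abnd h1; have [M2 hM2] := Abnd h2; have [M3 hM3] := Abnd (AD h1 h2).
suff: forall A B : R, (forall c, A < c -> \forall n \near omega, pw n (x1 n) < c) ->
  (forall c, B < c -> \forall n \near omega, pw n (x2 n) < c) -> 0 <= A ->
  ulim omega (fun n => pw n (x1 n + x2 n)) <= Num.max A B.
  apply; [move=> c; exact: (ulim_lt homega hM1) | move=> c; exact: (ulim_lt homega hM2) |].
  by apply: (ulim_ge homega hM1); apply: alw => n; exact: pw_ge0.
move=> A B hA1 hB1 A0.
pose m := Num.max A B.
have m0 : 0 <= m by rewrite /m le_max A0.
apply/ler_addgt0Pr => d d0.
pose dl := Num.min 1 (d / (m + 2)).
have dl0 : 0 < dl by rewrite lt_min ltr01 divr_gt0 // ltr_wpDl // ltr0n.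
have dl1 : dl <= 1 by rewrite ge_min lexx.
have dl2 : dl * (m + 2) <= d.
  by rewrite -ler_pdivlMr ?ltr_wpDl ?ltr0n // ge_min lexx orbT.
have c2 : (fun n => expR (eps n * ln 2)) @ omega --> expR (ee * ln 2).
  have H := @continuous_cvg _ _ _ omega _ (fun n => eps n * ln 2) expR (ee * ln 2) (@continuous_expR _ (ee * ln 2)).
  apply: H.
  by apply: cvgMr_tmp; exact: ee_cvg.
rewrite e0 mul0r expR0 in c2.
apply: (ulim_le homega hM3).
have ev1 : \forall n \near omega, pw n (x1 n) < A + dl.
  by apply: hA1; rewrite ltrDl.
have ev1' : \forall n \near omega, pw n (x2 n) < B + dl.
  by apply: hB1; rewrite ltrDl.
have ev2' : \forall n \near omega, expR (eps n * ln 2) < 1 + dl.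
  by apply: (cvgr_lt _ c2); rewrite ltrDl.
near=> n.
have hA : A <= m by rewrite /m le_max lexx.
have hB : B <= m by rewrite /m le_max lexx orbT.
have e2 : 2 `^ eps n < 1 + dl.
  by rewrite /powR pnatr_eq0 /=; near: n; exact: ev2'.
have key : forall y w : R[i], cmod w <= cmod y -> pw n (w + y) <= 2 `^ eps n * pw n y.
  move=> y w hwy; rewrite /pw -powRM ?cmod_ge0 //; apply: powR_mono.
    by case/andP: (heps n) => /ltW.
  rewrite cmod_ge0 /= mulr_natl mulr2n; apply: le_trans (cmodD _ _) _.
  by apply: lerD.
have fin : forall y w : R[i], cmod w <= cmod y -> pw n y < m + dl ->
    pw n (w + y) <= m + d.
  move=> y w hwy hy; apply: le_trans (key _ _ hwy) _.
  have hp : 0 <= pw n y by exact: pw_ge0.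
  have h : 2 `^ eps n * pw n y <= (1 + dl) * (m + dl).
    by apply: ler_pM; rewrite ?powR_ge0 // ltW.
  apply: le_trans h _; nra.
have [hle|hlt] := leP (cmod (x1 n)) (cmod (x2 n)).
  apply: fin => //; apply: (lt_le_trans (_ : _ < B + dl)); last by rewrite lerD2r.
  by near: n; exact: ev1'.
rewrite addrC; apply: fin; first exact: ltW.
apply: (lt_le_trans (_ : _ < A + dl)); last by rewrite lerD2r.
by near: n; exact: ev1.
Unshelve. all: by end_near.
Qed.


Lemma pow_inv_le (p x r : R) : 0 < p -> 0 <= x -> 0 <= r -> x `^ p <= r -> x <= r `^ p^-1.
Proof.
move=> p0 x0 r0 h.
have : (x `^ p) `^ p^-1 <= r `^ p^-1.
  by apply: powR_mono; rewrite ?invr_ge0 ?(ltW p0) // powR_ge0 h.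
by rewrite -powRrM mulfV ?gt_eqF // powRr1.
Qed.

Lemma pow_inv_ge (p x r : R) : 0 < p -> 0 <= x -> 0 <= r -> x <= r `^ p^-1 -> x `^ p <= r.
Proof.
move=> p0 x0 r0 h.
have : x `^ p <= (r `^ p^-1) `^ p by apply: powR_mono; rewrite ?(ltW p0) // x0 h.
by rewrite -powRrM mulVf ?gt_eqF // powRr1.
Qed.

Lemma small_pow (x p q : R) : 0 <= x <= 1 -> 0 < q <= p -> x `^ p <= x `^ q.
Proof.
move=> /andP[x0 x1] /andP[q0 qp].
have [->|xn0] := eqVneq x 0.
  by rewrite !powR0 ?gt_eqF // (lt_le_trans q0 qp).
by apply: ger_powR => //; rewrite lt_neqAle eq_sym xn0 x0 x1.
Qed.

Section Pos.
Hypothesis epos : 0 < ee.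

Definition fc (z : R[i]) : K := phi (fun _ => z).

Lemma fcB : {morph fc : x y / x - y}.
Proof. by move=> x y; rewrite /fc -(phiB (Acst x) (Acst y)). Qed.

Lemma fcM : {morph fc : x y / x * y}.
Proof. by move=> x y; rewrite /fc -(phiM (Acst x) (Acst y)). Qed.

Lemma fc1 : fc 1 = 1.
Proof. exact: phi1. Qed.

HB.instance Definition _ := GRing.isZmodMorphism.Build R[i] K fc fcB.
HB.instance Definition _ := GRing.isMonoidMorphism.Build R[i] K fc (conj fc1 fcM).

Lemma vfc z : v (fc z) = cmod z `^ ee.
Proof.
rewrite /fc (vphi (Acst z)) /pw.
have [c0|cn0] := eqVneq (cmod z) 0.
  rewrite c0 powR0 ?gt_eqF //.
  have -> : (fun n => 0 `^ eps n) = (fun _ => 0) by apply: funext => n; rewrite powR0 // eps_neq0.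
  exact: ulim_cst.
rewrite /powR (negbTE cn0) /ulim; apply: cvg_lim => //.
have H := @continuous_cvg _ _ _ omega _ (fun n => eps n * ln (cmod z)) expR
  (ee * ln (cmod z)) (@continuous_expR _ (ee * ln (cmod z))).
apply: H.
by apply: cvgMr_tmp; exact: ee_cvg.
Qed.

Lemma eps_half : \forall n \near omega, ee / 2 < eps n.
Proof.
apply: (ulim_gt homega eps_bnd); change (ee / 2 < ee).
by rewrite ltr_pdivrMr // ltr_pMr // ltr1n.
Qed.

Lemma bnd_of_pw a M : (forall n, pw n (a n) <= M) ->
  \forall n \near omega, cmod (a n) <= 1 + M `^ (ee / 2)^-1.
Proof.
move=> hM; apply: filterS eps_half => n hn.
have [h|h] := leP (cmod (a n)) 1; first by apply: le_trans h _; rewrite lerDl powR_ge0.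
apply: le_trans (_ : _ <= M `^ (ee / 2)^-1) _; last by rewrite lerDr.
apply: pow_inv_le => //; first by rewrite divr_gt0.
- exact: cmod_ge0.
- exact: le_trans (pw_ge0 _ _) (hM n).
apply: le_trans (hM n); rewrite /pw.
by apply: ler_powR; rewrite ltW.
Qed.

Lemma phi_fc a : Aeps eps a -> phi a = fc (clim omega a).
Proof.
move=> ha; have [M hM] := ha.
have hb := bnd_of_pw hM.
set c := clim omega a.
apply/eqP; rewrite -subr_eq0; apply/eqP/v_eq0/eqP; rewrite eq_le v_ge0 andbT.
apply/ler_addgt0Pr => d d0; rewrite add0r.
apply: (vphiB_le ha (Acst c)).
pose d1 := Num.min d 1.
have d10 : 0 < d1 by rewrite lt_min d0 ltr01.
have d11 : d1 <= 1 by rewrite ge_min lexx orbT.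
have e20 : 0 < ee / 2 by rewrite divr_gt0.
have hnear := clim_near homega hb (@powR_gt0 _ d1 ((ee / 2)^-1) d10).
apply: filterS2 hnear eps_half => n h1 h2.
have x0 : 0 <= cmod (a n - c) by exact: cmod_ge0.
have x1 : cmod (a n - c) <= 1.
  apply: le_trans (ltW h1) _.
  have : d1 `^ (ee / 2)^-1 <= 1 `^ (ee / 2)^-1.
    by apply: powR_mono; rewrite ?invr_ge0 ?(ltW e20) // (ltW d10).
  by rewrite powR1.
rewrite /pw; apply: le_trans (small_pow (p := eps n) (q := ee / 2) _ _) _.
- by rewrite x0 x1.
- by rewrite e20 ltW.
apply: le_trans (_ : _ <= d1) _; last by rewrite ge_min lexx.
by apply: pow_inv_ge => //; [exact: ltW d10 | exact: ltW h1].
Qed.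

Lemma inv_cauchy z (al : nat -> nat -> R[i]) :
  (forall k, v (z - phi (al k)) < (k.+1%:R)^-1) ->
  forall k m, (k <= m)%N -> v (phi (al m) - phi (al k)) <= (k.+1%:R)^-1 *+ 2.
Proof.
move=> hal k m km; apply: le_trans (vtri _ z _) _; rewrite vB mulr2n.
apply: lerD; last exact: ltW (hal k).
apply: le_trans (ltW (hal m)) _.
by rewrite lef_pV2 ?posrE ?ltr0n // ler_nat ltnS.
Qed.

Lemma nonprinc_U : exists U : set_system nat, UltraFilter U /\
  forall k, U [set m | (k <= m)%N].
Proof.
have [U [UU hU]] := @ultraFilterLemma nat \oo _.
by exists U; split => // k; apply: hU; exists k.
Qed.

Lemma fc_surj z : exists c, fc c = z.
Proof.
have /choice[al hal] : forall k : nat, exists a, Aeps eps a /\ v (z - phi a) < (k.+1%:R)^-1.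
  by move=> k; apply: phi_approx; rewrite invr_gt0 ltr0n.
pose c k := clim omega (al k).
have hc : forall k, phi (al k) = fc (c k) by move=> k; exact: phi_fc (hal k).1.
have [U [UU Uge]] := nonprinc_U.
have hcau := inv_cauchy (fun k => (hal k).2).
have ie0 : 0 < ee^-1 by rewrite invr_gt0.
have hB : \forall m \near U, cmod (c m) <= (v z + 1) `^ ee^-1.
  apply: filterS filterT => k _; apply: pow_inv_le; rewrite ?cmod_ge0 ?addr_ge0 ?v_ge0 //.
  rewrite -vfc -hc; apply: le_trans (_ : _ <= v z + v (phi (al k) - z)) _.
    by have := vD z (phi (al k) - z); rewrite addrC subrK.
  rewrite lerD2l vB; apply: le_trans (ltW (hal k).2) _.
  by rewrite invf_le1 ?ltr0n // ler1n.
have hcm : forall k m, (k <= m)%N -> cmod (c m - c k) <= ((k.+1%:R)^-1 *+ 2) `^ ee^-1.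
  move=> k m km; apply: pow_inv_le; rewrite ?cmod_ge0 ?mulrn_wge0 ?invr_ge0 ?ler0n //.
  by rewrite -vfc fcB -!hc; exact: hcau.
pose cs := clim U c.
have hcs : forall k, cmod (cs - c k) <= ((k.+1%:R)^-1 *+ 2) `^ ee^-1.
  move=> k; apply: (clim_close UU hB); first exact: powR_ge0.
  by apply: filterS (Uge k) => m km; exact: hcm.
exists cs.
apply/eqP; rewrite -subr_eq0; apply/eqP/v_eq0/eqP; rewrite eq_le v_ge0 andbT.
apply: (@le_of_invn _ 0 0 3) => j _; rewrite add0r.
apply: le_trans (vtri _ (fc (c j)) _) _.
rewrite -fcB vfc -hc [v (phi (al j) - z)]vB.
apply: le_trans (lerD (pow_inv_ge epos _ _ (hcs j)) (ltW (hal j).2)) _.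
- exact: cmod_ge0.
- by rewrite mulrn_wge0 // invr_ge0 ler0n.
by rewrite -mulrSr.
Qed.


Lemma surj_pos z : exists a, Aeps eps a /\ phi a = z.
Proof. by have [c <-] := fc_surj z; exists (fun _ => c); split => //; exact: Acst. Qed.

Lemma sph_pos : spherically_complete v.
Proof.
move=> a r hr hinc.
have /choice[c hc] : forall k, exists c, fc c = a k by move=> k; exact: fc_surj.
have [U [UU Uge]] := nonprinc_U.
have ie0 : 0 < ee^-1 by rewrite invr_gt0.
have hcm : forall k m, (k <= m)%N -> cmod (c m - c k) <= r k `^ ee^-1.
  move=> k m km; apply: pow_inv_le; rewrite ?cmod_ge0 ?(ltW (hr k)) //.
  by rewrite -vfc fcB !hc; exact: ball_chain.
have hB : \forall m \near U, cmod (c m) <= r 0%N `^ ee^-1 + cmod (c 0%N).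
  apply: filterS filterT => m _.
  have -> : c m = (c m - c 0%N) + c 0%N by rewrite subrK.
  by apply: le_trans (cmodD _ _) _; rewrite lerD2r; exact: hcm.
pose cs := clim U c.
exists (fc cs) => k; rewrite /cball /= -hc -fcB vfc.
apply: pow_inv_ge; rewrite ?cmod_ge0 ?(ltW (hr k)) //.
apply: (clim_close UU hB); first exact: powR_ge0.
by apply: filterS (Uge k) => m km; exact: hcm.
Qed.

Lemma arch_pos : archimedean_norm v.
Proof.
move=> hna; have := hna 1 1; rewrite v1 maxxx.
have -> : (1 + 1 : K) = fc (1 + 1) by rewrite /fc (phiD (Acst 1) (Acst 1)) phi1.
rewrite vfc; apply/negP; rewrite -ltNge.
have h2 : 1 < cmod (1 + 1 : R[i]).
  apply: lt_le_trans (Re_le_cmod _); rewrite /=.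
  by rewrite ger0_norm ?addr_ge0 // ltrDl.
rewrite /powR gt_eqF ?(lt_trans ltr01 h2) //.
by rewrite expR_gt1 mulr_gt0 // ln_gt0.
Qed.

Lemma fc_props : exists f : {rmorphism R[i] -> K}, bijective f /\
  forall z, v (f z) = cmod z `^ ee.
Proof.
exists (fc : {rmorphism R[i] -> K}); split; last exact: vfc.
have /choice[g hg] : forall k, exists c, fc c = k by move=> k; exact: fc_surj.
exists g => [z|k]; last exact: hg.
by apply: (fmorph_inj (fc : {rmorphism R[i] -> K})); exact: hg.
Qed.

End Pos.

Lemma main_in :
  [/\ GRing.closed_field_axiom K,
      spherically_complete v,
      range v = [set r : R | 0 <= r],
      (0 < ulim omega eps ->
         (exists f : {rmorphism R[i] -> K}, bijective f /\
            forall z, v (f z) = cmod z `^ ulim omega eps)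
         /\ archimedean_norm v)
    & (ulim omega eps = 0 -> non_archimedean v)].
Proof.
have [e0|epos] : ee = 0 \/ 0 < ee.
  by have := ee_ge0; rewrite le_eqVlt => /orP[/eqP <-|->]; [left|right].
- split.
  + exact: closedK (surj0 e0).
  + exact: sph0 e0.
  + exact: range_v.
  + by move=> h; move: h; rewrite -/ee e0 ltxx.
  + by move=> _; exact: nonarch0 e0.
- split.
  + exact: closedK (surj_pos epos).
  + exact: sph_pos epos.
  + exact: range_v.
  + by move=> _; split; [exact: fc_props epos | exact: arch_pos epos].
  + by rewrite -/ee => h; move: epos; rewrite h ltxx.
Qed.



End Main.

Unset Implicit Arguments.
Set Strict Implicit.

Theorem mainTheorem6 (R : realType) (eps : nat -> R)
  (heps : forall n, 0 < eps n <= 1)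
  (omega : set_system nat) (homega : UltraFilter omega)
  (K : fieldType) (v : K -> R) (phi : (nat -> R[i]) -> K)
  (hK : is_Homega eps omega v phi) :
  [/\ GRing.closed_field_axiom K,
      spherically_complete v,
      range v = [set r : R | 0 <= r],
      (0 < ulim omega eps ->
         (exists f : {rmorphism R[i] -> K}, bijective f /\
            forall z, v (f z) = cmod z `^ ulim omega eps)
         /\ archimedean_norm v)
    & (ulim omega eps = 0 -> non_archimedean v)].
Proof. exact: (main_in heps homega hK). Qed.
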